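(* For any frame $L$, the poset $\overline{\mathrm{IC}}(L)$ is order-isomorphic to $\{g\in\mathrm{IC}(L)\mid \boldsymbol{-1}\le g\le\boldsymbol{1}\}$.
   Context: $\mathbb{Q}$ is the rationals. The frame of extended partial reals $\mathfrak{L}(\overline{\mathbb{IR}})$ is the frame presented by generators $(r,\textsf{---})$, $(\textsf{---},s)$ ($r,s\in\mathbb{Q}$) subject to (r1) $(r,\textsf{---})\wedge(\textsf{---},s)=0$ whenever $r\ge s$; (r3) $(r,\textsf{---})=\bigvee_{s>r}(s,\textsf{---})$; (r4) $(\textsf{---},s)=\bigvee_{r<s}(\textsf{---},r)$. The frame of partial reals $\mathfrak{L}(\mathbb{IR})$ is obtained by adding the relations (r5) $\bigvee_r(r,\textsf{---})=1$ and (r6) $\bigvee_s(\textsf{---},s)=1$. $\overline{\mathrm{IC}}(L)$ (resp. $\mathrm{IC}(L)$) is the set of frame homomorphisms $\mathfrak{L}(\overline{\mathbb{IR}})\to L$ (resp. $\mathfrak{L}(\mathbb{IR})\to L$), ordered by $f\le g$ iff $f(r,\textsf{---})\le g(r,\textsf{---})$ and $g(\textsf{---},s)\le f(\textsf{---},s)$ for all $r,s\in\mathbb{Q}$. For $q\in\mathbb{Q}$, the constant $\boldsymbol{q}\in\mathrm{IC}(L)$ is given by $\boldsymbol{q}(p,\textsf{---})=1$ if $p<q$ and $0$ otherwise, $\boldsymbol{q}(\textsf{---},p)=1$ if $p>q$ and $0$ otherwise. *)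

(* Defs.v *)
From mathcomp Require Import all_boot all_order all_algebra.
Set Implicit Arguments. Unset Strict Implicit. Unset Printing Implicit Defensive.
Import Order.TTheory GRing.Theory Num.Theory.
Local Open Scope ring_scope.

Record Frame := {
  carrier :> Type;
  fle : carrier -> carrier -> Prop;
  fle_refl : forall x, fle x x;
  fle_trans : forall x y z, fle x y -> fle y z -> fle x z;
  fle_anti : forall x y, fle x y -> fle y x -> x = y;
  fjoin : (carrier -> Prop) -> carrier;
  fjoin_ub : forall (P : carrier -> Prop) x, P x -> fle x (fjoin P);
  fjoin_least : forall (P : carrier -> Prop) y,
      (forall x, P x -> fle x y) -> fle (fjoin P) y;
  fmeet : carrier -> carrier -> carrier;
  fmeet_l : forall a b, fle (fmeet a b) a;
  fmeet_r : forall a b, fle (fmeet a b) b;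
  fmeet_glb : forall a b c, fle c a -> fle c b -> fle c (fmeet a b);
  ftop : carrier;
  ftop_max : forall x, fle x ftop;
  fbot : carrier;
  fbot_min : forall x, fle fbot x;
  fmeet_join_distr : forall a (P : carrier -> Prop),
      fmeet a (fjoin P) = fjoin (fun y => exists x, P x /\ y = fmeet a x)
}.

Definition fsup (L : Frame) (I : Type) (C : I -> Prop) (F : I -> L) : L :=
  fjoin (fun y => exists i, C i /\ y = F i).

(* An assignment of the generators (r,---) and (---,s), r,s : rat, into L.
   By the universal property of a frame presentation, frame homomorphisms
   from the presented frame into L are exactly the assignments that respect
   the defining relations. *)
Record genmap (L : Frame) := GenMap {
  gup : rat -> L;    (* image of (r,---) *)
  gdown : rat -> L   (* image of (---,s) *)
}.

(* relations (r1), (r3), (r4): frame homs L(extended IR) -> L *)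
Definition is_ICbar (L : Frame) (f : genmap L) : Prop :=
  (forall r s : rat, s <= r -> fmeet (gup f r) (gdown f s) = fbot L) /\
  (forall r : rat, gup f r = fsup (fun s : rat => r < s) (gup f)) /\
  (forall s : rat, gdown f s = fsup (fun r : rat => r < s) (gdown f)).

(* additionally (r5), (r6): frame homs L(IR) -> L *)
Definition is_IC (L : Frame) (f : genmap L) : Prop :=
  is_ICbar f /\
  fsup (fun _ : rat => True) (gup f) = ftop L /\
  fsup (fun _ : rat => True) (gdown f) = ftop L.

Definition gle (L : Frame) (f g : genmap L) : Prop :=
  (forall r : rat, fle (gup f r) (gup g r)) /\
  (forall s : rat, fle (gdown g s) (gdown f s)).

Definition gconst (L : Frame) (q : rat) : genmap L :=
  GenMap (fun p : rat => if p < q then ftop L else fbot L)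
         (fun p : rat => if q < p then ftop L else fbot L).

Definition ICbar (L : Frame) := {f : genmap L | is_ICbar f}.
Definition IC (L : Frame) := {f : genmap L | is_IC f}.

Definition IC_bounded (L : Frame) :=
  {g : genmap L | is_IC g /\ gle (gconst L (-1)) g /\ gle g (gconst L 1)}.

(* Main.v *)
Require Import Defs.
From mathcomp Require Import all_boot all_order all_algebra.
From mathcomp Require Import ring lra.
Set Implicit Arguments. Unset Strict Implicit. Unset Printing Implicit Defensive.
Import Order.TTheory GRing.Theory Num.Theory.
Local Open Scope ring_scope.

Definition t (x : rat) : rat := x / (1 + `|x|).

Lemma t_homo : {homo t : x y / x < y}.
Proof.
move=> x y xy; rewrite /t -subr_gt0.
have hx : 0 < 1 + `|x| by rewrite ltr_pwDl.
have hy : 0 < 1 + `|y| by rewrite ltr_pwDl.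
have -> : y / (1 + `|y|) - x / (1 + `|x|) =
  (y * (1 + `|x|) - x * (1 + `|y|)) / ((1 + `|x|) * (1 + `|y|)).
  by field; apply/andP; split; rewrite gt_eqF.
apply: divr_gt0; last exact: mulr_gt0.
case: (lerP 0 x) => hx0; case: (lerP 0 y) => hy0;
  rewrite ?(ger0_norm hx0) ?(ger0_norm hy0) ?(ltr0_norm hx0) ?(ltr0_norm hy0); nra.
Qed.

Lemma tlt x y : (t x < t y) = (x < y).
Proof. by rewrite !ltNge (le_mono t_homo). Qed.
Lemma tle x y : (t x <= t y) = (x <= y).
Proof. exact: (le_mono t_homo). Qed.

Lemma t_gt x : -1 < t x.
Proof.
have hx : 0 < 1 + `|x| by rewrite ltr_pwDl.
rewrite /t ltr_pdivlMr //.
case: (lerP 0 x) => hx0; rewrite ?(ger0_norm hx0) ?(ltr0_norm hx0); lra.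
Qed.
Lemma t_lt x : t x < 1.
Proof.
have hx : 0 < 1 + `|x| by rewrite ltr_pwDl.
rewrite /t ltr_pdivrMr //.
case: (lerP 0 x) => hx0; rewrite ?(ger0_norm hx0) ?(ltr0_norm hx0); lra.
Qed.

Lemma t_surj y : -1 < y -> y < 1 -> exists x, t x = y.
Proof.
move=> h1 h2; exists (y / (1 - `|y|)); rewrite /t.
case: (lerP 0 y) => hy0; rewrite ?(ger0_norm hy0) ?(ltr0_norm hy0).
- have hp : 0 < 1 - y by lra.
  rewrite ger0_norm; last by apply: divr_ge0; lra.
  field; apply/andP; split; rewrite ?gt_eqF //.
  have -> : 1 - y + y = 1 by ring. by [].
- have hp : 0 < 1 + y by lra.
  rewrite ltr0_norm; last by rewrite ltr_pdivrMr; lra.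
  have -> : 1 - - y = 1 + y by ring.
  field; apply/andP; split; rewrite ?gt_eqF //.
  have -> : 1 + y - y = 1 by ring. by [].
Qed.
From Stdlib Require Import FunctionalExtensionality ProofIrrelevance.

Section Fr.
Variable L : Frame.

Lemma fsup_ub I (C : I -> Prop) (F : I -> L) i : C i -> fle (F i) (fsup C F).
Proof. by move=> Ci; apply: fjoin_ub; exists i. Qed.
Lemma fsup_least I (C : I -> Prop) (F : I -> L) y :
  (forall i, C i -> fle (F i) y) -> fle (fsup C F) y.
Proof. by move=> H; apply: fjoin_least => x [i [Ci ->]]; apply: H. Qed.
Lemma fsup_ub' I (C : I -> Prop) (F : I -> L) x i :
  fle x (F i) -> C i -> fle x (fsup C F).
Proof. by move=> h Ci; apply: fle_trans h (fsup_ub _ Ci). Qed.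
Lemma bot_eq (a : L) : fle a (fbot L) -> a = fbot L.
Proof. by move=> h; apply: fle_anti => //; apply: fbot_min. Qed.
Lemma top_eq (a : L) : fle (ftop L) a -> a = ftop L.
Proof. by move=> h; apply: fle_anti => //; apply: ftop_max. Qed.
Lemma fsup_empty I (C : I -> Prop) (F : I -> L) : (forall i, ~ C i) -> fsup C F = fbot L.
Proof. by move=> H; apply: bot_eq; apply: fsup_least => i /H. Qed.
Lemma fsup_mono I (C : I -> Prop) (F G : I -> L) :
  (forall i, C i -> fle (F i) (G i)) -> fle (fsup C F) (fsup C G).
Proof.
move=> H; apply: fsup_least => i Ci; apply: fle_trans (H i Ci) _; exact: fsup_ub.
Qed.
Lemma meetC (a b : L) : fmeet a b = fmeet b a.
Proof. by apply: fle_anti; apply: fmeet_glb; (apply: fmeet_l || apply: fmeet_r). Qed.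
Lemma meet_fsup_bot I J (C : I -> Prop) (D : J -> Prop) (F : I -> L) (G : J -> L) :
  (forall i j, C i -> D j -> fmeet (F i) (G j) = fbot L) ->
  fmeet (fsup C F) (fsup D G) = fbot L.
Proof.
move=> H; apply: bot_eq; rewrite {2}/fsup fmeet_join_distr.
apply: fjoin_least => y [x [[j [Dj ->]] ->]].
rewrite meetC /fsup fmeet_join_distr; apply: fjoin_least => z [w [[i [Ci ->]] ->]].
rewrite meetC (H _ _ Ci Dj); exact: fle_refl.
Qed.

Lemma up_anti (u : rat -> L) : (forall r, u r = fsup (fun s => r < s) u) ->
  forall r s, r < s -> fle (u s) (u r).
Proof. by move=> H r s rs; rewrite (H r); apply: fsup_ub. Qed.
Lemma down_mono (d : rat -> L) : (forall s, d s = fsup (fun r => r < s) d) ->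
  forall r s, r < s -> fle (d r) (d s).
Proof. by move=> H r s rs; rewrite (H s); apply: fsup_ub. Qed.

Definition phig (f : genmap L) : genmap L :=
  GenMap (fun p => if p < -1 then ftop L else fsup (fun a => p < t a) (gup f))
         (fun p => if 1 < p then ftop L else fsup (fun a => t a < p) (gdown f)).

Definition psig (g : genmap L) : genmap L :=
  GenMap (fun r => gup g (t r)) (fun s => gdown g (t s)).

Lemma phig_IC f : is_ICbar f -> is_IC (phig f).
Proof.
case=> [h1 [h3 h4]]; split; [split; [|split]|split].
- move=> r s sr /=; case: ifP => rlt.
    have sl : ~~ (1 < s) by rewrite -leNgt; apply: le_trans sr _; lra.
    rewrite (negbTE sl) fsup_empty; first by apply: bot_eq; apply: fmeet_r.
    by move=> a ha; have := t_gt a; lra.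
  case: ifP => slt.
    rewrite fsup_empty; first by apply: bot_eq; apply: fmeet_l.
    by move=> a ha; have := t_lt a; lra.
  apply: meet_fsup_bot => a b ra bs; apply: h1.
  by rewrite -tle; lra.
- move=> r /=; case: ifP => rlt.
    apply: esym; apply: top_eq.
    have hs : r < (r - 1) / 2 by lra.
    apply: (@fsup_ub' _ _ _ _ ((r - 1) / 2)) => //=.
    have -> : (r - 1) / 2 < -1 by lra.
    exact: fle_refl.
  apply: fle_anti.
    apply: fsup_least => a ra; rewrite (h3 a); apply: fsup_least => b ab.
    apply: (@fsup_ub' _ _ _ _ (t a)) => //=.
    have -> : (t a < -1) = false by apply/negbTE; rewrite -leNgt; apply: ltW; apply: t_gt.
    by apply: fsup_ub; rewrite tlt.
  apply: fsup_least => s rs.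
  have -> : (s < -1) = false by apply/negbTE; rewrite -leNgt; move/negbT: rlt; rewrite -leNgt; lra.
  apply: fsup_least => a sa; apply: fsup_ub; lra.
- move=> s /=; case: ifP => slt.
    apply: esym; apply: top_eq.
    have hs : (s + 1) / 2 < s by lra.
    apply: (@fsup_ub' _ _ _ _ ((s + 1) / 2)) => //=.
    have -> : 1 < (s + 1) / 2 by lra.
    exact: fle_refl.
  apply: fle_anti.
    apply: fsup_least => a sa; rewrite (h4 a); apply: fsup_least => b ab.
    apply: (@fsup_ub' _ _ _ _ (t a)) => //=.
    have -> : (1 < t a) = false by apply/negbTE; rewrite -leNgt; apply: ltW; apply: t_lt.
    by apply: fsup_ub; rewrite tlt.
  apply: fsup_least => r rs.
  have -> : (1 < r) = false by apply/negbTE; rewrite -leNgt; move/negbT: slt; rewrite -leNgt; lra.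
  apply: fsup_least => a sa; apply: fsup_ub; lra.
- apply: top_eq; have h : (fun _ : rat => True) (-2) by [].
  apply: (@fsup_ub' _ _ _ _ (-2)) => //=.
  exact: fle_refl.
- apply: top_eq; have h : (fun _ : rat => True) 2 by [].
  apply: (@fsup_ub' _ _ _ _ 2) => //=.
  exact: fle_refl.
Qed.


Lemma phig_bounds f : gle (gconst L (-1)) (phig f) /\ gle (phig f) (gconst L 1).
Proof.
split; split => p /=.
- case: ifP => _; [exact: fle_refl | exact: fbot_min].
- case: (ltrP (-1) p) => h; first exact: ftop_max.
  have -> : (1 < p) = false by apply/negbTE; rewrite -leNgt; lra.
  rewrite fsup_empty; first exact: fle_refl.
  by move=> a ha; have := t_gt a; lra.
- case: (ltrP p 1) => h; first exact: ftop_max.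
  have -> : (p < -1) = false by apply/negbTE; rewrite -leNgt; lra.
  rewrite fsup_empty; first exact: fle_refl.
  by move=> a ha; have := t_lt a; lra.
- case: ifP => _; [exact: fle_refl | exact: fbot_min].
Qed.

Section Bnd.
Variable g : genmap L.
Hypothesis hg : is_IC g.
Hypothesis hl : gle (gconst L (-1)) g.
Hypothesis hu : gle g (gconst L 1).

Lemma g_up_bot q : 1 <= q -> gup g q = fbot L.
Proof. move=> h; apply: bot_eq; have := hu.1 q => /=; rewrite ifF //; apply/negbTE; rewrite -leNgt //. Qed.
Lemma g_down_bot q : q <= -1 -> gdown g q = fbot L.
Proof. move=> h; apply: bot_eq; have := hl.2 q => /=; rewrite ifF //; apply/negbTE; rewrite -leNgt //. Qed.
Lemma g_up_top q : q < -1 -> gup g q = ftop L.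
Proof. move=> h; apply: top_eq; have := hl.1 q => /=; rewrite ifT //. Qed.
Lemma g_down_top q : 1 < q -> gdown g q = ftop L.
Proof. move=> h; apply: top_eq; have := hu.2 q => /=; rewrite ifT //. Qed.

Lemma psig_ICbar : is_ICbar (psig g).
Proof.
case: hg => [[h1 [h3 h4]] _]; split; [|split].
- move=> r s sr /=; apply: h1; by rewrite tle.
- move=> r /=; apply: fle_anti.
    rewrite (h3 (t r)); apply: fsup_least => q rq.
    case: (ltrP q 1) => hq; last by rewrite g_up_bot //; apply: fbot_min.
    have [a ta] : exists a, t a = q by apply: t_surj => //; have := t_gt r; lra.
    rewrite -ta; apply: (@fsup_ub' _ _ _ _ a); first exact: fle_refl.
    by rewrite -tlt ta.
  apply: fsup_least => s rs; apply: up_anti => //; by rewrite tlt.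
- move=> s /=; apply: fle_anti.
    rewrite (h4 (t s)); apply: fsup_least => q qs.
    case: (ltrP (-1) q) => hq; last by rewrite g_down_bot //; apply: fbot_min.
    have [a ta] : exists a, t a = q by apply: t_surj => //; have := t_lt s; lra.
    rewrite -ta; apply: (@fsup_ub' _ _ _ _ a); first exact: fle_refl.
    by rewrite -tlt ta.
  apply: fsup_least => r rs; apply: down_mono => //; by rewrite tlt.
Qed.

Lemma phi_psi : phig (psig g) = g.
Proof.
case: hg => [[h1 [h3 h4]] _].
case: g h1 h3 h4 g_up_top g_down_top g_up_bot g_down_bot => u d /= h1 h3 h4 ut dt ub db.
rewrite /phig /psig /=; congr GenMap; apply: functional_extensionality => p /=.
- case: ifP => hp; first by rewrite ut.
  apply: fle_anti.
    by apply: fsup_least => a pa; apply: up_anti.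
  rewrite (h3 p); apply: fsup_least => q pq.
  case: (ltrP q 1) => hq; last by rewrite ub //; apply: fbot_min.
  have [a ta] : exists a, t a = q.
    by apply: t_surj => //; move/negbT: hp; rewrite -leNgt; lra.
  rewrite -ta; apply: (@fsup_ub' _ _ _ _ a); first exact: fle_refl.
  by rewrite ta.
- case: ifP => hp; first by rewrite dt.
  apply: fle_anti.
    by apply: fsup_least => a pa; apply: down_mono.
  rewrite (h4 p); apply: fsup_least => q pq.
  case: (ltrP (-1) q) => hq; last by rewrite db //; apply: fbot_min.
  have [a ta] : exists a, t a = q.
    by apply: t_surj => //; move/negbT: hp; rewrite -leNgt; lra.
  rewrite -ta; apply: (@fsup_ub' _ _ _ _ a); first exact: fle_refl.
  by rewrite ta.
Qed.
End Bnd.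

Lemma psi_phi f : is_ICbar f -> psig (phig f) = f.
Proof.
case: f => u d /= [h1 [h3 h4]]; rewrite /psig /phig /=.
congr GenMap; apply: functional_extensionality => r /=.
- have -> : (t r < -1) = false by apply/negbTE; rewrite -leNgt; apply: ltW; apply: t_gt.
  have -> : (fun a => is_true (t r < t a)) = (fun a => is_true (r < a)).
    by apply: functional_extensionality => a; rewrite tlt.
  by rewrite -h3.
- have -> : (1 < t r) = false by apply/negbTE; rewrite -leNgt; apply: ltW; apply: t_lt.
  have -> : (fun a => is_true (t a < t r)) = (fun a => is_true (a < r)).
    by apply: functional_extensionality => a; rewrite tlt.
  by rewrite -h4.
Qed.

Lemma phig_mono f g : gle f g -> gle (phig f) (phig g).
Proof.
case=> hu hd; split => p /=; (case: ifP => _; [exact: fle_refl|]); exact: fsup_mono.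
Qed.

Lemma phig_refl f g : is_ICbar f -> is_ICbar g -> gle (phig f) (phig g) -> gle f g.
Proof.
move=> hf hg; rewrite -{2}(psi_phi hf) -{2}(psi_phi hg).
case=> hu hd; split => r /=; [exact: hu | exact: hd].
Qed.

End Fr.

Lemma sig_eq A (P : A -> Prop) (x y : {a | P a}) : proj1_sig x = proj1_sig y -> x = y.
Proof.
case: x y => [a pa] [b pb] /= eab; subst b; congr exist; apply: proof_irrelevance.
Qed.

Theorem proposition3p1 (L : Frame) :
  exists phi : ICbar L -> IC_bounded L,
    bijective phi /\
    (forall f g : ICbar L,
        gle (proj1_sig f) (proj1_sig g) <->
        gle (proj1_sig (phi f)) (proj1_sig (phi g))).
Proof.
pose phi := fun f : ICbar L =>
  exist (fun g => is_IC g /\ gle (gconst L (-1)) g /\ gle g (gconst L 1))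
    (phig (proj1_sig f)) (conj (phig_IC (proj2_sig f)) (phig_bounds (proj1_sig f))).
pose psi := fun g : IC_bounded L =>
  exist (fun f => is_ICbar f) (psig (proj1_sig g))
    (let: conj a (conj b c) := proj2_sig g in psig_ICbar a b c).
exists phi; split.
- exists psi.
    by move=> f; apply: sig_eq; rewrite /= psi_phi //; apply: (proj2_sig f).
  move=> g; apply: sig_eq => /=.
  case: g => g [a [b c]] /=; exact: phi_psi.
- move=> f g; split; first exact: phig_mono.
  by apply: phig_refl; [exact: (proj2_sig f) | exact: (proj2_sig g)].
Qed.
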